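(* Let $F$ be a field, $V$ a nonzero vector space over $F$, $\Gamma$ a nonempty set, $\varphi:\Gamma\to\Gamma$ a map and $\mathfrak{w}\in F^\Gamma$, and let $\sigma_{\varphi,\mathfrak{w}}:V^\Gamma\to V^\Gamma$, $(x_\alpha)_{\alpha\in\Gamma}\mapsto(\mathfrak{w}_\alpha x_{\varphi(\alpha)})_{\alpha\in\Gamma}$. If $W(\varphi)\setminus\downarrow\mathfrak{Z}\neq\varnothing$, then $F\setminus\{0\}\subseteq{\rm Eigen}(\sigma_{\varphi,\mathfrak{w}},V^\Gamma)$; moreover in this case ${\rm Eigen}(\sigma_{\varphi,\mathfrak{w}},V^\Gamma)=F\setminus\{0\}$ if $\varphi(\Gamma\setminus\mathfrak{Z})=\Gamma$, and ${\rm Eigen}(\sigma_{\varphi,\mathfrak{w}},V^\Gamma)=F$ otherwise.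
   Context: For a linear map $T:W\to W$ on an $F$-vector space $W$, ${\rm Eigen}(T,W)$ is the set of all $r\in F$ such that $T(x)=rx$ for some nonzero $x\in W$. $\mathfrak{Z}:=\{\alpha\in\Gamma:\mathfrak{w}_\alpha=0\}$ and $\downarrow\mathfrak{Z}:=\bigcup_{n\geq0}\varphi^{-n}(\mathfrak{Z})$. A point $a\in\Gamma$ is wandering if the sequence $(\varphi^n(a))_{n\geq1}$ is one-to-one; $W(\varphi)$ is the set of wandering points. *)

(* Defs.v *)
From HB Require Import structures.
From mathcomp Require Import all_boot all_order all_algebra.
Set Implicit Arguments. Unset Strict Implicit. Unset Printing Implicit Defensive.
Import GRing.Theory.
Local Open Scope ring_scope.

Definition sigma_op (F : fieldType) (V : lmodType F) (Gamma : Type)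
  (phi : Gamma -> Gamma) (w : Gamma -> F) (x : Gamma -> V) : Gamma -> V :=
  fun a => w a *: x (phi a).

Definition Eigen (F : fieldType) (V : lmodType F) (Gamma : Type)
  (T : (Gamma -> V) -> (Gamma -> V)) (r : F) : Prop :=
  exists x : Gamma -> V, x <> (fun _ => 0) /\ T x = (fun a => r *: x a).

Definition Zset (F : fieldType) (Gamma : Type) (w : Gamma -> F) (a : Gamma) : Prop :=
  w a = 0.

Definition downZ (F : fieldType) (Gamma : Type) (phi : Gamma -> Gamma)
  (w : Gamma -> F) (a : Gamma) : Prop :=
  exists n : nat, Zset w (iter n phi a).

Definition wandering (Gamma : Type) (phi : Gamma -> Gamma) (a : Gamma) : Prop :=
  forall m n : nat, iter m.+1 phi a = iter n.+1 phi a -> m = n.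

(* Main.v *)
Require Import Defs.
From mathcomp Require Import all_boot all_order all_algebra.
From Stdlib Require Import Classical ClassicalEpsilon FunctionalExtensionality.
From mathcomp Require Import ring.
Set Implicit Arguments.
Import GRing.Theory.
Local Open Scope ring_scope.

Section S.
Variables (F : fieldType) (Gamma : Type) (phi : Gamma -> Gamma) (w : Gamma -> F) (a : Gamma) (r : F).
Hypothesis ha : forall n, w (iter n phi a) != 0.
Hypothesis hr : r != 0.

Definition Pn n := \prod_(i < n) w (iter i phi a).
Definition ff k n b := r^-1 ^+ k * \prod_(i < k) w (iter i phi b) * r ^+ n / Pn n.

Lemma Pn_neq0 n : Pn n != 0.
Proof. rewrite /Pn; apply/prodf_neq0 => i _; exact: ha. Qed.

Lemma ff_step k n b : iter k phi b = iter n phi a -> ff k n b = ff k.+1 n.+1 b.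
Proof.
move=> e; rewrite /ff /Pn !big_ord_recr /= e exprS exprSr.
have h1 := ha n. have h2 := Pn_neq0 n. rewrite /Pn in h2.
by field; rewrite h1 h2 hr.
Qed.

Lemma ff_shift d k n b : iter k phi b = iter n phi a -> ff k n b = ff (d + k) (d + n) b.
Proof.
elim: d => [//|d IH] e; rewrite IH // ff_step //.
by rewrite !iterD e.
Qed.
End S.

Theorem lemma2p5 (F : fieldType) (V : lmodType F) (Gamma : Type)
  (phi : Gamma -> Gamma) (w : Gamma -> F)
  (hV : exists v : V, v != 0) (hGamma : inhabited Gamma)
  (hW : exists a : Gamma, wandering phi a /\ ~ downZ phi w a) :
  (forall r : F, r != 0 -> Eigen (sigma_op (V:=V) phi w) r) /\
  ((forall b : Gamma, exists a : Gamma, ~ Zset w a /\ phi a = b) ->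
     forall r : F, Eigen (sigma_op (V:=V) phi w) r <-> r != 0) /\
  (~ (forall b : Gamma, exists a : Gamma, ~ Zset w a /\ phi a = b) ->
     forall r : F, Eigen (sigma_op (V:=V) phi w) r).
Proof.
have [v hv] := hV.
have [a [wa nda]] := hW.
have ha : forall n, w (iter n phi a) != 0.
  by move=> n; apply/eqP => h; apply: nda; exists n.
have inj : forall m n, iter m phi a = iter n phi a -> m = n.
  by move=> m n e; apply: wa; rewrite !iterS e.
have part1 : forall r : F, r != 0 -> Eigen (sigma_op (V:=V) phi w) r.
  move=> r hr.
  pose G b := exists kn : nat * nat, iter kn.1 phi b = iter kn.2 phi a.
  pose x : Gamma -> V := fun b =>
    match excluded_middle_informative (G b) with
    | left h => let kn := proj1_sig (constructive_indefinite_description _ h) in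
                @ff _ _ phi w a r kn.1 kn.2 b *: v
    | right _ => 0 end.
  have cons : forall b k n k' n', iter k phi b = iter n phi a ->
      iter k' phi b = iter n' phi a -> @ff _ _ phi w a r k n b = @ff _ _ phi w a r k' n' b.
    move=> b k n k' n'.
    wlog le : k n k' n' / (k <= k')%N => [H|e e'].
      case: (leqP k k') => h; first exact: H.
      by move=> e e'; symmetry; apply: H => //; apply: ltnW.
    move: e'; rewrite -(subnK le) iterD e -iterD => /inj <-.
    exact: (@ff_shift _ _ phi w a r ha hr (k' - k) _ _ _ e).
  have xE : forall b k n, iter k phi b = iter n phi a -> x b = @ff _ _ phi w a r k n b *: v.
    move=> b k n e; rewrite /x; case: excluded_middle_informative => [h|h].
      case: constructive_indefinite_description => [[k0 n0] /= e0].
      by rewrite (cons b k0 n0 k n).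
    by exfalso; apply: h; exists (k, n).
  exists x; split.
    move=> h; have := congr1 (fun f => f a) h => /=.
    rewrite (xE a 0%N 0%N) // /ff /Pn !big_ord0 !expr0 !mul1r invr1 scale1r => e.
    by rewrite e eqxx in hv.
  apply: functional_extensionality => b; rewrite /sigma_op.
  case: (classic (G b)) => [[[k n] /= e]|nG].
    have e1 : iter k phi (phi b) = iter n.+1 phi a by rewrite -iterSr iterS e -iterS.
    rewrite (xE _ _ _ e1) (xE b k.+1 n.+1); last by rewrite iterS e -iterS.
    rewrite !scalerA; congr (_ *: _).
    rewrite /ff big_ord_recl /= [r^-1 ^+ k.+1]exprS.
    have -> : \prod_(i<k) w (phi (iter (0+i) phi b)) = \prod_(i<k) w (iter i phi (phi b)).
      by apply: eq_bigr => i _; rewrite add0n -iterSr.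
    have hP := @Pn_neq0 _ _ phi w a ha n.+1.
    by field; rewrite hr hP.
  have -> : x b = 0.
    rewrite /x; case: excluded_middle_informative => // h; by exfalso.
  have -> : x (phi b) = 0.
    rewrite /x; case: excluded_middle_informative => // h; exfalso; apply: nG.
    case: h => [[k n] /= e]; exists (k.+1, n); change (iter k.+1 phi b = iter n phi a); by rewrite iterSr.
  by rewrite !scaler0.
split; first exact: part1.
split.
  move=> surj r; split; last exact: part1.
  move=> [x [nx ex]]; apply/eqP => r0; apply: nx; apply: functional_extensionality => b.
  have [c [nc hc]] := surj b.
  have := congr1 (fun f => f c) ex; rewrite /sigma_op r0 scale0r hc => /eqP.
  rewrite scaler_eq0 => /orP [/eqP h|/eqP //]; by exfalso.
move=> nsurj r.
case: (eqVneq r 0) => [->|]; last exact: part1.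
have [b hb] := not_all_ex_not _ _ nsurj.
pose x : Gamma -> V := fun c => if excluded_middle_informative (c = b) then v else 0.
exists x; split.
  have xb : x b = v by rewrite /x; case: excluded_middle_informative.
  move=> h; have := congr1 (fun f => f b) h; rewrite /= xb => e.
  by rewrite e eqxx in hv.
apply: functional_extensionality => c; rewrite /sigma_op scale0r /x.
case: (excluded_middle_informative (phi c = b)) => [e|ne] /=; last by rewrite scaler0.
case: (classic (w c = 0)) => [->|nw]; first by rewrite scale0r.
by exfalso; apply: hb; exists c.
Qed.
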